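(* Let $R$ be a left Noetherian ring and $A$ any left $R$-module. Then $A$ is isomorphic to the inverse limit of a countable inverse system (indexed by the finite subsets of a countably infinite set, ordered by inclusion) of injective left $R$-modules whose connecting homomorphisms are all one-to-one.
   Context: Rings are associative with unit, modules are unital. *)

(* Defs.v *)
From HB Require Import structures.
From mathcomp Require Import all_boot all_order all_algebra.
Set Implicit Arguments. Unset Strict Implicit. Unset Printing Implicit Defensive.
Import GRing.Theory.
Local Open Scope ring_scope.

Definition left_ideal (R : pzRingType) (I : R -> Prop) : Prop :=
  [/\ I 0, (forall x y, I x -> I y -> I (x + y)) & (forall r x, I x -> I (r * x))].

Definition left_noetherian (R : pzRingType) : Prop :=
  forall I : nat -> R -> Prop,
    (forall n, left_ideal (I n)) ->
    (forall n x, I n x -> I n.+1 x) ->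
    exists N, forall n x, (N <= n)%N -> I n x -> I N x.

Definition injective_module (R : pzRingType) (M : lmodType R) : Prop :=
  forall (X Y : lmodType R) (f : {linear X -> Y}) (g : {linear X -> M}),
    injective f -> exists h : {linear Y -> M}, forall x, h (f x) = g x.

(* Finite subsets of the countably infinite set nat, represented canonically
   as strictly increasing lists. *)
Definition finsub : Type := {s : seq nat | sorted ltn s}.

Definition finsub_le (S T : finsub) : bool := all (fun x => x \in val T) (val S).

Definition inverse_system (R : pzRingType) (M : finsub -> lmodType R)
  (p : forall S T : finsub, finsub_le S T -> {linear M T -> M S}) : Prop :=
  (forall S (h : finsub_le S S) x, p S S h x = x) /\
  (forall S T U (hST : finsub_le S T) (hTU : finsub_le T U) (hSU : finsub_le S U) x,
      p S T hST (p T U hTU x) = p S U hSU x).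

(* A is isomorphic to the inverse limit lim M = { compatible threads
   (x_S) in prod_S M S }: there are linear maps phi_S : A -> M S compatible
   with the system such that the induced linear map A -> lim M is bijective. *)
Definition is_inverse_limit (R : pzRingType) (A : lmodType R)
  (M : finsub -> lmodType R)
  (p : forall S T : finsub, finsub_le S T -> {linear M T -> M S}) : Prop :=
  exists phi : forall S, {linear A -> M S},
    [/\ (forall S T (h : finsub_le S T) a, p S T h (phi T a) = phi S a),
        (forall a b, (forall S, phi S a = phi S b) -> a = b) &
        (forall x : forall S, M S,
            (forall S T (h : finsub_le S T), p S T h (x T) = x S) ->
            exists a, forall S, phi S a = x S)].

(* Main.v *)
Require Import Defs.
From HB Require Import structures.
From mathcomp Require Import all_boot all_order all_algebra.
From Stdlib Require Import ClassicalEpsilon FunctionalExtensionality PropExtensionality ProofIrrelevance.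
Set Implicit Arguments. Unset Strict Implicit. Unset Printing Implicit Defensive.
Import Order.TTheory GRing.Theory Num.Theory.
Local Open Scope ring_scope.

Section Cl.
Variable T : Type.
Definition ceq (x y : T) : bool := if excluded_middle_informative (x = y) then true else false.
Lemma ceqP : Equality.axiom ceq.
Proof. move=> x y; rewrite /ceq; case: excluded_middle_informative => h; by constructor. Qed.
Definition cfind (P : pred T) (n : nat) : option T :=
  match excluded_middle_informative (exists x, P x) with
  | left h => Some (proj1_sig (constructive_indefinite_description _ h))
  | right _ => None end.
Lemma cfind_correct P n x : cfind P n = Some x -> P x.
Proof.
rewrite /cfind; case: excluded_middle_informative => // h [<-].
exact: (proj2_sig (constructive_indefinite_description _ h)).
Qed.
Lemma cfind_complete (P : pred T) : (exists x, P x) -> exists n, cfind P n.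
Proof. move=> h; exists 0%N; rewrite /cfind; by case: excluded_middle_informative. Qed.
Lemma cfind_ext (P Q : pred T) : P =1 Q -> cfind P =1 cfind Q.
Proof. move=> h; have -> : P = Q by apply: functional_extensionality. by []. Qed.
End Cl.


Section Tower.
Variable T : Type.
Definition sub (c d : T -> Prop) := forall x, c x -> d x.
Variable f : (T -> Prop) -> (T -> Prop).
Hypothesis subf : forall c, sub c (f c).
Inductive tw : (T -> Prop) -> Prop :=
  | twf c : tw c -> tw (f c)
  | twu (F : (T -> Prop) -> Prop) : (forall c, F c -> tw c) -> tw (fun x => exists c, F c /\ c x).

Lemma setext (c d : T -> Prop) : sub c d -> sub d c -> c = d.
Proof.
move=> h1 h2; apply: functional_extensionality => x.
apply: propositional_extensionality; split; [exact: h1 | exact: h2].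
Qed.

Definition extreme c := forall d, tw d -> sub d c -> ~ sub c d -> sub (f d) c.

Lemma lem1 c : extreme c -> forall d, tw d -> sub d c \/ sub (f c) d.
Proof.
move=> ec d; elim=> {d} [d twd IH | F twF IH].
- case: IH => [dc | fcd].
  + case: (classic (sub c d)) => cd.
      by right; rewrite (setext dc cd).
    by left; apply: ec.
  + by right => x /fcd /subf.
- case: (classic (exists e, F e /\ sub (f c) e)) => [[e [Fe fce]] | H].
    by right => x /fce ex; exists e.
  left => x [e [Fe ex]]; case: (IH e Fe) => [ec' | fce]; first exact: ec'.
  by case: H; exists e.
Qed.

Lemma lem2 c : tw c -> extreme c.
Proof.
elim=> {c} [c twc ec | F twF IH].
- move=> d twd dfc nfcd.
  case: (lem1 ec twd) => [dc | fcd]; last by case: nfcd.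
  case: (classic (sub c d)) => cd.
    by rewrite (setext dc cd) => x.
  by move=> x /(ec d twd dc cd) /subf.
- move=> d twd dU nUd.
  case: (classic (exists e, F e /\ sub d e)) => [[e [Fe de]] | H].
    case: (classic (sub e d)) => ed.
      have ede := setext de ed; subst d.
      have [e' [Fe' ne'e]] : exists e', F e' /\ ~ sub e' e.
        apply: NNPP => H; apply: nUd => x [e' [Fe' e'x]].
        apply: NNPP => nx; apply: H; exists e'; split => // H2.
        by apply: nx; apply: H2.
      case: (lem1 (IH e Fe) (twF e' Fe')) => [//|fee'].
      by move=> x /fee' e'x; exists e'.
    by move=> x /(IH e Fe d twd de ed) ex; exists e.
  exfalso; apply: nUd => x [e [Fe ex]].
  case: (lem1 (IH e Fe) twd) => [de | fed].
    by case: H; exists e.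
  exact/fed/subf.
Qed.

Lemma tw_total c d : tw c -> tw d -> sub c d \/ sub d c.
Proof.
move=> twc twd; case: (lem1 (lem2 twc) twd) => h; first by right.
by left => x /subf /h.
Qed.

Definition top := fun x => exists c, tw c /\ c x.
Lemma tw_top : tw top.
Proof. by apply: twu. Qed.
Lemma f_top : sub (f top) top.
Proof. move=> x fx; exists (f top); split => //; apply: twf; exact: tw_top. Qed.
End Tower.

Section Zorn.
Variables (T : Type) (le : T -> T -> Prop).
Hypothesis le_trans : forall x y z, le x y -> le y z -> le x z.
Hypothesis le_refl : forall x, le x x.
Definition chain (c : T -> Prop) := forall x y, c x -> c y -> le x y \/ le y x.
Hypothesis ub_ex : forall c, chain c -> exists u, forall x, c x -> le x u.

Lemma zorn : exists m, forall x, le m x -> le x m.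
Proof.
apply: NNPP => nomax.
have gex : forall m, exists x, le m x /\ ~ le x m.
  move=> m; apply: NNPP => H; apply: nomax; exists m => x lemx.
  by apply: NNPP => nx; apply: H; exists x.
pose g m := proj1_sig (constructive_indefinite_description _ (gex m)).
have gP m : le m (g m) /\ ~ le (g m) m := proj2_sig (constructive_indefinite_description _ (gex m)).
have t0 : T.
  have h := ub_ex (c := fun _ => False) (fun x y f => match f with end).
  exact: (proj1_sig (constructive_indefinite_description _ h)).
have uex : forall c : T -> Prop, exists u, chain c -> forall x, c x -> le x u.
  move=> c; case: (classic (chain c)) => hc.
    by have [u hu] := ub_ex hc; exists u.
  by exists t0.
pose u c := proj1_sig (constructive_indefinite_description _ (uex c)).
have uP c : chain c -> forall x, c x -> le x (u c) := proj2_sig (constructive_indefinite_description _ (uex c)).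
pose f (c : T -> Prop) := fun x => c x \/ x = g (u c).
have subf c : sub c (f c) by move=> x cx; left.
have twchain c : tw f c -> chain c.
  elim=> {c} [c twc cc | F twF IH].
  - have ub := uP c cc.
    move=> x y [cx|->] [cy|->].
    + exact: cc.
    + left; apply: le_trans (ub x cx) (proj1 (gP _)).
    + right; apply: le_trans (ub y cy) (proj1 (gP _)).
    + by left; apply: le_refl.
  - move=> x y [c [Fc cx]] [d [Fd dy]].
    case: (tw_total subf (twF c Fc) (twF d Fd)) => h.
    + exact: (IH d Fd x y (h x cx) dy).
    + exact: (IH c Fc x y cx (h y dy)).
have ct := twchain _ (tw_top f).
have := f_top (f := f) (x := g (u (top f))) (or_intror erefl).
move=> [c [twc cx]].
have := uP _ ct _ (ex_intro _ c (conj twc cx)).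
by case: (gP (u (top f))).
Qed.
End Zorn.

Section Ext.
Variable R : pzRingType.

Definition baer (E : lmodType R) := forall (I : R -> Prop) (phi : R -> E), left_ideal I ->
  (forall x y, I x -> I y -> phi (x + y) = phi x + phi y) ->
  (forall r x, I x -> phi (r * x) = r *: phi x) ->
  exists e, forall x, I x -> phi x = x *: e.

Definition submod (Y : lmodType R) (P : Y -> Prop) :=
  [/\ P 0, forall x y, P x -> P y -> P (x + y) & forall r x, P x -> P (r *: x)].

Definition linon (Y E : lmodType R) (P : Y -> Prop) (g : Y -> E) :=
  (forall x y, P x -> P y -> g (x + y) = g x + g y) /\
  (forall r x, P x -> g (r *: x) = r *: g x).

Variable E : lmodType R.
Hypothesis bE : baer E.

Section OneY.
Variables (Y : lmodType R) (P : Y -> Prop) (g : Y -> E).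
Hypothesis sP : submod P.
Hypothesis lg : linon P g.

Definition pobj := {qh : (Y -> Prop) * (Y -> E) |
  [/\ submod qh.1, sub P qh.1, linon qh.1 qh.2 & forall y, P y -> qh.2 y = g y]}.
Definition ple (a b : pobj) := sub (sval a).1 (sval b).1 /\
  forall y, (sval a).1 y -> (sval a).2 y = (sval b).2 y.

Lemma ple_trans a b c : ple a b -> ple b c -> ple a c.
Proof.
move=> [s1 e1] [s2 e2]; split; first by move=> y /s1 /s2.
by move=> y q; rewrite e1 // e2 //; apply: s1.
Qed.
Lemma ple_refl a : ple a a. Proof. by split. Qed.

Lemma chain_ub c : chain ple c -> exists u, forall x, c x -> ple x u.
Proof.
move=> cc.
pose Q y := P y \/ exists t, c t /\ (sval t).1 y.
pose h y := match excluded_middle_informative (exists t, c t /\ (sval t).1 y) with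
  | left H => (sval (sval (constructive_indefinite_description _ H))).2 y
  | right _ => g y end.
have ht t y : c t -> (sval t).1 y -> h y = (sval t).2 y.
  move=> ct qy; rewrite /h; case: excluded_middle_informative => [H|H]; last by case: H; exists t.
  case: (constructive_indefinite_description _ H) => t' [ct' qy'] /=.
  case: (cc _ _ ct ct') => [[_ e]|[_ e]]; [by rewrite e | by rewrite e].
have hP y : P y -> h y = g y.
  move=> py; rewrite /h; case: excluded_middle_informative => // H.
  case: (constructive_indefinite_description _ H) => t [ct qy] /=.
  by case: (svalP t) => _ _ _ ->.
have common y z : Q y -> Q z -> (P y /\ P z) \/ exists t, [/\ c t, (sval t).1 y & (sval t).1 z].
  move=> [py|[t [ct qy]]] [pz|[t' [ct' qz]]].
  - by left.
  - right; exists t'; split => //; by case: (svalP t') => _ s _ _; apply: s.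
  - right; exists t; split => //; by case: (svalP t) => _ s _ _; apply: s.
  - right; case: (cc _ _ ct ct') => [[s _]|[s _]].
    + by exists t'; split => //; apply: s.
    + by exists t; split => //; apply: s.
have sQ : submod Q.
  case: sP => P0 PD PZ; split; first by left.
  - move=> y z qy qz; case: (common y z qy qz) => [[py pz]|[t [ct ty tz]]].
      by left; apply: PD.
    by right; exists t; split => //; case: (svalP t) => [[_ D _]] _ _ _; apply: D.
  - move=> r y [py|[t [ct ty]]]; first by left; apply: PZ.
    by right; exists t; split => //; case: (svalP t) => [[_ _ Z]] _ _ _; apply: Z.
have lh : linon Q h.
  split.
  - move=> y z qy qz; case: (common y z qy qz) => [[py pz]|[t [ct ty tz]]].
      case: sP => _ PD _; rewrite !hP //; [by case: lg => -> | by apply: PD].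
    case: (svalP t) => [[_ D _]] _ [lD _] _.
    by rewrite !(ht t) //; [apply: lD | apply: D].
  - move=> r y [py|[t [ct ty]]].
      case: sP => _ _ PZ; rewrite !hP //; [by case: lg => _ -> | by apply: PZ].
    case: (svalP t) => [[_ _ Z]] _ [_ lZ] _.
    by rewrite !(ht t) //; [apply: lZ | apply: Z].
have sPQ : sub P Q by move=> y py; left.
pose u : pobj := exist _ (Q, h) (And4 sQ sPQ lh hP).
exists u => t ct; split.
- by move=> y ty; right; exists t.
- by move=> y ty /=; rewrite (ht t).
Qed.

Lemma baer_ext_one : exists h : Y -> E, linon (fun _ => True) h /\ forall y, P y -> h y = g y.
Proof.
have [m mmax] := zorn ple_trans ple_refl chain_ub.
case: m mmax => [[Q h] [sQ sPQ lh hg]] /= mmax.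
suff allQ : forall y, Q y.
  exists h; split => //; case: (lh) => lD lZ; split.
    by move=> y z _ _; apply: lD.
  by move=> r y _; apply: lZ.
move=> y0; apply: NNPP => ny0.
have sPQ0 : sub P Q := sPQ. have hg0 : forall y, P y -> h y = g y := hg.
have [Q0 QD QZ] : submod Q := sQ; have [hD hZ] : linon Q h := lh.
have hN x : Q x -> h (- x) = - h x.
  by move=> qx; rewrite -scaleN1r hZ // scaleN1r.
have hB x z : Q x -> Q z -> h (x - z) = h x - h z.
  move=> qx qz; rewrite hD ?hN //; rewrite -scaleN1r; exact: QZ.
pose I r := Q (r *: y0).
have lI : left_ideal I.
  split; first by rewrite /I scale0r.
  - by move=> x z ix iz; rewrite /I scalerDl; apply: QD.
  - by move=> r x ix; rewrite /I -scalerA; apply: QZ.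
have [e he] : exists e, forall x, I x -> h (x *: y0) = x *: e.
  apply: (bE (phi := fun r => h (r *: y0)) lI).
    by move=> x z ix iz; rewrite scalerDl hD.
  by move=> r x ix; rewrite -scalerA hZ.
pose Q' z := exists qr : Y * R, Q qr.1 /\ z = qr.1 + qr.2 *: y0.
pose h' z := match excluded_middle_informative (exists qr : Y * R, Q qr.1 /\ z = qr.1 + qr.2 *: y0) with
  | left H => let qr := sval (constructive_indefinite_description _ H) in h qr.1 + qr.2 *: e
  | right _ => 0 end.
have h'E q r : Q q -> h' (q + r *: y0) = h q + r *: e.
  move=> qq; rewrite /h'; case: excluded_middle_informative => [H|H]; last first.
    by case: H; exists (q, r).
  case: (constructive_indefinite_description _ H) => [[q' r']] /= [qq' eq].
  have ir : I (r - r').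
    rewrite /I scalerBl.
    have -> : r *: y0 - r' *: y0 = q' - q.
      apply/eqP; rewrite subr_eq addrAC -eq addrC addrA addNr add0r //.
    by apply: QD => //; rewrite -scaleN1r; apply: QZ.
  have := he _ ir; rewrite scalerBl.
  have -> : r *: y0 - r' *: y0 = q' - q.
    apply/eqP; rewrite subr_eq addrAC -eq addrC addrA addNr add0r //.
  rewrite hB // scalerBl => /eqP; rewrite subr_eq => /eqP ->.
  by rewrite addrAC subrK addrC.
have sQ' : submod Q'.
  split.
  - by exists (0, 0); rewrite /= scale0r addr0.
  - move=> a b [[q r] /= [qq ->]] [[q' r'] /= [qq' ->]].
    exists (q + q', r + r') => /=; split; first exact: QD.
    by rewrite scalerDl addrACA.
  - move=> s a [[q r] /= [qq ->]]; exists (s *: q, s * r) => /=; split; first exact: QZ.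
    by rewrite scalerDr scalerA.
have lh' : linon Q' h'.
  split.
  - move=> a b [[q r] /= [qq ->]] [[q' r'] /= [qq' ->]].
    rewrite addrACA -scalerDl !h'E //; last exact: QD.
    by rewrite hD // scalerDl addrACA.
  - move=> s a [[q r] /= [qq ->]].
    rewrite scalerDr scalerA !h'E //; last exact: QZ.
    by rewrite hZ // scalerDr scalerA.
have sQQ' : sub Q Q' by move=> q qq; exists (q, 0); rewrite /= scale0r addr0.
have h'h q : Q q -> h' q = h q.
  by move=> qq; have := h'E q 0 qq; rewrite !scale0r !addr0.
have sPQ' : sub P Q' by move=> p /sPQ0 /sQQ'.
have h'g y : P y -> h' y = g y by move=> py; rewrite h'h ?hg0 //; apply: sPQ0.
pose m' : pobj := exist _ (Q', h') (And4 sQ' sPQ' lh' h'g).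
have [le1 _] := mmax m' (conj sQQ' (fun q qq => esym (h'h q qq))).
apply: ny0; apply: le1; exists (0, 1) => /=; split => //.
by rewrite add0r scale1r.
Qed.
End OneY.

Lemma baer_injective : injective_module E.
Proof.
move=> X Y f g finj.
pose P (y : Y) := exists x, y = f x.
pose g' (y : Y) := match excluded_middle_informative (exists x, y = f x) with
  | left H => g (sval (constructive_indefinite_description _ H))
  | right _ => 0 end.
have g'E x : g' (f x) = g x.
  rewrite /g'; case: excluded_middle_informative => [H|H]; last by case: H; exists x.
  by case: (constructive_indefinite_description _ H) => x' /= /finj ->.
have sP : submod P.
  split.
  - by exists 0; rewrite linear0.
  - by move=> _ _ [x ->] [z ->]; exists (x + z); rewrite linearD.
  - by move=> r _ [x ->]; exists (r *: x); rewrite linearZ.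
have lg : linon P g'.
  split.
  - by move=> _ _ [x ->] [z ->]; rewrite -linearD !g'E linearD.
  - by move=> r _ [x ->]; rewrite -linearZ !g'E linearZ.
have [h [[hD hZ] hg]] := baer_ext_one sP lg.
have hlin : linear h.
  by move=> a u v; rewrite hD // hZ.
pose hh : {linear Y -> E} := HB.pack h (GRing.isLinear.Build _ _ _ _ h hlin).
exists hh => x /=; rewrite hg; [exact: g'E | by exists x].
Qed.
End Ext.

Definition frac (q : rat) : rat := q - (Num.floor q)%:~R.

Lemma floor_addz (q : rat) (z : int) : Num.floor (q + z%:~R) = Num.floor q + z.
Proof. by rewrite floorDrz ?intrKfloor // rpred_int. Qed.

Lemma frac_floor q : Num.floor (frac q) = 0.
Proof. by rewrite /frac -mulrNz floor_addz subrr. Qed.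

Lemma fracD q (z : int) : frac (q + z%:~R) = frac q.
Proof. by rewrite /frac floor_addz intrD opprD addrACA subrr addr0. Qed.

Lemma frac_id q : Num.floor q = 0 -> frac q = q.
Proof. by move=> h; rewrite /frac h subr0. Qed.

Lemma frac_frac q y : frac (frac q + y) = frac (q + y).
Proof.
have -> : frac q + y = (q + y) + (- Num.floor q)%:~R by rewrite /frac mulrNz addrAC.
by rewrite fracD.
Qed.

Lemma fracz (z : int) : frac z%:~R = 0.
Proof. by rewrite /frac intrKfloor subrr. Qed.

Lemma frac_eq0 q : frac q = 0 -> q = (Num.floor q)%:~R.
Proof. by move/eqP; rewrite subr_eq0 => /eqP. Qed.

Definition D := {q : rat | Num.floor q == 0}.
HB.instance Definition _ := Choice.on D.

Lemma pi_proof q : Num.floor (frac q) == 0.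
Proof. by rewrite frac_floor. Qed.
Definition piq (q : rat) : D := exist _ (frac q) (pi_proof q).

Lemma piK (a : D) : piq (sval a) = a.
Proof. by apply: val_inj => /=; rewrite frac_id //; apply/eqP/(svalP a). Qed.

Lemma pi_eq x y : frac x = frac y -> piq x = piq y.
Proof. by move=> h; apply: val_inj. Qed.

Definition Dadd (a b : D) := piq (sval a + sval b).
Definition Dopp (a : D) := piq (- sval a).
Definition D0 := piq 0.

Lemma pi_add x y : Dadd (piq x) (piq y) = piq (x + y).
Proof. by apply: pi_eq => /=; rewrite frac_frac addrC frac_frac addrC. Qed.
Lemma pi_opp x : Dopp (piq x) = piq (- x).
Proof.
apply: pi_eq => /=.
have -> : - frac x = - x + (Num.floor x)%:~R by rewrite /frac opprB addrC.
by rewrite fracD.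
Qed.

Lemma DaddA : associative Dadd.
Proof. by move=> a b c; rewrite -[a]piK -[b]piK -[c]piK !pi_add addrA. Qed.
Lemma DaddC : commutative Dadd.
Proof. by move=> a b; rewrite /Dadd addrC. Qed.
Lemma Dadd0 : left_id D0 Dadd.
Proof. by move=> a; rewrite -[a]piK /D0 pi_add add0r. Qed.
Lemma DaddN : left_inverse D0 Dopp Dadd.
Proof. by move=> a; rewrite -[a]piK pi_opp pi_add addNr. Qed.

HB.instance Definition _ := GRing.isZmodule.Build D DaddA DaddC Dadd0 DaddN.

Lemma piD x y : piq (x + y) = piq x + piq y.
Proof. by rewrite -pi_add. Qed.
Lemma piN x : piq (- x) = - piq x.
Proof. by rewrite -pi_opp. Qed.
Lemma pi_morph : zmod_morphism piq.
Proof. by move=> x y; rewrite piD piN. Qed.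
HB.instance Definition _ := GRing.isZmodMorphism.Build rat D piq pi_morph.

Lemma piz (z : int) : piq z%:~R = 0.
Proof. by apply: val_inj => /=; rewrite fracz. Qed.

Lemma pi_eq0 q : piq q = 0 -> q = (Num.floor q)%:~R.
Proof.
move=> h; apply: frac_eq0; have := congr1 sval h => /= ->.
by rewrite /= /frac floor0 subrr.
Qed.

Lemma D_div (d : D) (n : int) : n != 0 -> exists e : D, e *~ n = d.
Proof.
move=> nz; exists (piq (sval d / n%:~R)).
rewrite -raddfMz -mulrzr mulfVK ?intr_eq0 //; exact: piK.
Qed.

Definition bp (P : Prop) : bool := if excluded_middle_informative P then true else false.
Lemma bpP P : reflect P (bp P).
Proof. rewrite /bp; case: excluded_middle_informative => h; by constructor. Qed.

Lemma int_ideal (J : int -> Prop) : left_ideal J ->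
  (forall n, J n -> n = 0) \/
  exists k : int, [/\ 0 < k, J k & forall n, J n -> exists q, n = q * k].
Proof.
move=> [J0 JD JM].
case: (classic (exists n, J n /\ n <> 0)) => [[n [Jn nz]]|H]; last first.
  left => n Jn; apply: NNPP => nz; apply: H; by exists n.
right.
have ex : exists m : nat, (0 < m)%N && bp (J m%:Z).
  case: n Jn nz => m Jm nz.
    exists m; apply/andP; split; last exact/bpP.
    by rewrite lt0n; apply/eqP => m0; apply: nz; rewrite m0.
  exists m.+1; apply/andP; split => //; apply/bpP.
  have := JM (-1) _ Jm; by rewrite NegzE mulN1r opprK.
case: (ex_minnP ex) => k /andP [k0 /bpP Jk] kmin.
exists k%:Z; split => //.
move=> m Jm; exists (m %/ k)%Z.
have kz : k%:Z != 0 by rewrite eqz_nat -lt0n.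
have Jr : J (m %% k)%Z.
  have -> : (m %% k)%Z = m + (- (m %/ k)%Z) * k.
    by rewrite {2}(divz_eq m k) mulNr addrAC subrr add0r.
  by apply: JD => //; apply: JM.
have r0 : (m %% k)%Z = 0.
  have := modz_ge0 m kz; have := ltz_pmod m (d := k%:Z) => /(_ k0).
  case E: (m %% k)%Z => [r|r] // rk _.
  case: r E rk Jr => [|r] E rk Jr //.
  have := kmin r.+1; rewrite ltz_nat in rk.
  have -> : (0 < r.+1)%N && bp (J r.+1%:Z) by apply/andP; split => //; apply/bpP; rewrite -E.
  by move=> /(_ isT); rewrite leqNgt rk.
by rewrite {1}(divz_eq m k) r0 addr0.
Qed.

Lemma additive0 (U V : zmodType) (f : U -> V) : (forall a b, f (a + b) = f a + f b) -> f 0 = 0.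
Proof. by move=> h; apply: (@addrI _ (f 0)); rewrite -h !addr0. Qed.

Lemma D_baer : baer (zmodule D).
Proof.
move=> I phi lI phiD phiM.
have phi0 : phi 0 = 0.
  case: lI => I0 _ _; apply: (@addrI _ (phi 0)); by rewrite -phiD // !addr0.
case: (int_ideal lI) => [all0|[k [k0 Ik kdiv]]].
  by exists 0 => x /all0 ->; rewrite phi0 scaler0.
have kz : k != 0 by apply: lt0r_neq0.
have [e he] := D_div (phi k : D) kz.
exists e => x /kdiv [q ->].
by rewrite phiM // scalezrE scalezrE -he -mulrzA mulrC.
Qed.

Lemma D_sep (X : zmodType) (P : X -> Prop) (x : X) :
  @submod int (zmodule X) P -> ~ P x ->
  exists g : X -> D, [/\ forall a b, g (a + b) = g a + g b, forall p, P p -> g p = 0 & g x != 0].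
Proof.
move=> sP nPx; have [P0 PD PZ] := sP.
have PZ' r (y : X) : P y -> P (y *~ r).
  by move=> py; have := PZ r y py; rewrite scalezrE.
have PN (y : X) : P y -> P (- y).
  by move=> py; rewrite -mulrN1z; apply: PZ'.
pose J n := P (x *~ n).
have lJ : left_ideal J.
  split; first by rewrite /J mulr0z.
  - by move=> a b ja jb; rewrite /J mulrzDr; apply: PD.
  - by move=> r a ja; rewrite /J mulrC mulrzA; apply: PZ'.
have [c [c1 cdiv]] : exists c : int, 1 < c /\ forall n, J n -> exists q, n = q * c.
  case: (int_ideal lJ) => [all0|[k [k0 Jk kdiv]]].
    by exists 2; split => // n /all0 ->; exists 0; rewrite mul0r.
  exists k; split => //.
  have k1 : k != 1 by apply/eqP => k1; apply: nPx; move: Jk; rewrite /J k1 mulr1z.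
  by rewrite lt_def k1 /= -gtz0_ge1.
have cz : c != 0 by apply/eqP => c0; rewrite c0 in c1.
have cR : (c%:~R : rat) != 0 by rewrite intr_eq0.
pose phi (n : int) : D := piq (n%:~R / c%:~R).
have phiD a b : phi (a + b) = phi a + phi b by rewrite /phi intrD mulrDl raddfD.
have phiJ n : J n -> phi n = 0.
  by move=> /cdiv [q ->]; rewrite /phi intrM mulfK // piz.
have phi1 : phi 1 != 0.
  apply/eqP => /pi_eq0; rewrite mul1r.
  have -> : Num.floor (c%:~R : rat)^-1 = 0.
    apply: floor_def; rewrite add0r invr_ge0 ler0z (ltW (lt_trans _ c1)) //=.
    by rewrite invf_lt1 ?ltr0z ?(lt_trans _ c1) // ltr1z.
  by move/eqP; rewrite invr_eq0 (negbTE cR).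
have phiZ n r : phi (n * r) = phi n *~ r.
  by rewrite /phi intrM mulrAC mulrzr raddfMz.
pose P' (z : zmodule X) := exists pn : X * int, P pn.1 /\ z = pn.1 + x *~ pn.2.
pose g0 (z : zmodule X) : zmodule D :=
  match excluded_middle_informative (exists pn : X * int, P pn.1 /\ z = pn.1 + x *~ pn.2) with
  | left H => phi (sval (constructive_indefinite_description _ H)).2
  | right _ => 0 end.
have g0E p n : P p -> g0 (p + x *~ n) = phi n.
  move=> pp; rewrite /g0; case: excluded_middle_informative => [H|H]; last by case: H; exists (p, n).
  case: (constructive_indefinite_description _ H) => [[p' n']] /= [pp' e].
  have : J (n - n').
    rewrite /J mulrzBr.
    have -> : x *~ n - x *~ n' = p' - p.
      by apply/eqP; rewrite subr_eq addrAC -e addrC addrA addNr add0r.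
    by apply: PD => //; apply: PN.
  move/phiJ => h.
  by rewrite -[n](subrK n') phiD h add0r.
have sP' : @submod int (zmodule X) P'.
  split.
  - by exists (0, 0); rewrite /= mulr0z addr0.
  - move=> a b [[p n] /= [pp ->]] [[p' n'] /= [pp' ->]].
    exists (p + p', n + n') => /=; split; first exact: PD.
    by rewrite mulrzDr addrACA.
  - move=> r a [[p n] /= [pp ->]]; exists (p *~ r, n * r) => /=; split; first exact: PZ'.
    by rewrite scalezrE mulrzDl mulrzA.
have lg0 : linon P' g0.
  split.
  - move=> a b [[p n] /= [pp ->]] [[p' n'] /= [pp' ->]].
    by rewrite addrACA -mulrzDr (g0E (p + p')) ?g0E ?phiD //; apply: PD.
  - move=> r a [[p n] /= [pp ->]].
    change (g0 ((p + x *~ n) *~ r) = g0 (p + x *~ n) *~ r).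
    by rewrite mulrzDl -mulrzA (g0E (p *~ r)) ?g0E ?phiZ //; apply: PZ'.
have [h [[hD _] hg]] := baer_ext_one D_baer sP' lg0.
exists h; split.
- by move=> a b; apply: hD.
- move=> p pp; have -> : p = p + x *~ 0 by rewrite mulr0z addr0.
  rewrite hg; last by exists (p, 0).
  by rewrite g0E // /phi mul0r raddf0.
- have -> : x = 0 + x *~ 1 by rewrite mulr1z add0r.
  by rewrite hg ?g0E //; exists (0, 1).
Qed.

Lemma addz_morph (U V : zmodType) (f : U -> V) :
  (forall a b, f (a + b) = f a + f b) -> forall a n, f (a *~ n) = f a *~ n.
Proof.
move=> fD a n.
have f0 := additive0 fD.
have fN b : f (- b) = - f b.
  by apply: (@addrI _ (f b)); rewrite -fD !subrr.
have fn m : f (a *+ m) = f a *+ m.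
  by elim: m => [|m IH]; rewrite ?mulr0n // !mulrS fD IH.
case: n => m; first by rewrite -!pmulrn fn.
by rewrite NegzE !mulrNz fN -!pmulrn fn.
Qed.

Section CMod.
Variable R : pzRingType.

Record Cf := MkC { cf : R -> D; cfD : forall a b, cf (a + b) = cf a + cf b }.

Lemma Ceq (a b : Cf) : (forall s, cf a s = cf b s) -> a = b.
Proof.
case: a => fa ha; case: b => fb hb /= h.
have e : fa = fb by apply: functional_extensionality.
subst fb; f_equal; apply: proof_irrelevance.
Qed.

HB.instance Definition _ := hasDecEq.Build Cf (@ceqP Cf).
HB.instance Definition _ := hasChoice.Build Cf (@cfind_correct Cf) (@cfind_complete Cf) (@cfind_ext Cf).

Fact Cadd_proof (u v : Cf) a b : cf u (a + b) + cf v (a + b) = (cf u a + cf v a) + (cf u b + cf v b).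
Proof. by rewrite !cfD addrACA. Qed.
Definition Cadd (u v : Cf) := MkC (Cadd_proof u v).
Fact Copp_proof (u : Cf) a b : - cf u (a + b) = - cf u a + - cf u b.
Proof. by rewrite cfD opprD. Qed.
Definition Copp (u : Cf) := MkC (Copp_proof u).
Fact C0_proof (a b : R) : (0 : D) = 0 + 0. Proof. by rewrite addr0. Qed.
Definition C0 := MkC C0_proof.

Lemma CaddA : associative Cadd. Proof. by move=> u v w; apply: Ceq => s /=; rewrite addrA. Qed.
Lemma CaddC : commutative Cadd. Proof. by move=> u v; apply: Ceq => s /=; rewrite addrC. Qed.
Lemma Cadd0 : left_id C0 Cadd. Proof. by move=> u; apply: Ceq => s /=; rewrite add0r. Qed.
Lemma CaddN : left_inverse C0 Copp Cadd. Proof. by move=> u; apply: Ceq => s /=; rewrite addNr. Qed.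
HB.instance Definition _ := GRing.isZmodule.Build Cf CaddA CaddC Cadd0 CaddN.

Fact Cscale_proof (r : R) (u : Cf) a b : cf u ((a + b) * r) = cf u (a * r) + cf u (b * r).
Proof. by rewrite mulrDl cfD. Qed.
Definition Cscale r u := MkC (Cscale_proof r u).

Lemma CscaleA a b v : Cscale a (Cscale b v) = Cscale (a * b) v.
Proof. by apply: Ceq => s /=; rewrite mulrA. Qed.
Lemma Cscale1 : left_id 1 Cscale.
Proof. by move=> v; apply: Ceq => s /=; rewrite mulr1. Qed.
Lemma CscaleDr : right_distributive Cscale +%R.
Proof. by move=> r u v; apply: Ceq => s /=. Qed.
Lemma CscaleDl v : {morph Cscale^~ v : a b / a + b}.
Proof. by move=> a b; apply: Ceq => s /=; rewrite mulrDr cfD. Qed.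
HB.instance Definition _ := GRing.Zmodule_isLmodule.Build R Cf CscaleA Cscale1 CscaleDr CscaleDl.

Lemma cf_add (u v : Cf) s : cf (u + v) s = cf u s + cf v s. Proof. by []. Qed.
Lemma cf_scale r (u : Cf) s : cf (r *: u) s = cf u (s * r). Proof. by []. Qed.
Lemma cf_zero s : cf (0 : Cf) s = 0. Proof. by []. Qed.

Lemma C_baer : baer Cf.
Proof.
move=> I Phi lI PhiD PhiM.
have [I0 ID IM] := lI.
pose psi (x : zmodule R) : zmodule D := cf (Phi x) 1.
have sI : @submod int (zmodule R) I.
  split => //; move=> n x ix; rewrite scalezrE -mulrzl; exact: IM.
have lpsi : @linon int (zmodule R) (zmodule D) I psi.
  split.
  - by move=> x y ix iy; rewrite /psi PhiD.
  - move=> n x ix; rewrite scalezrE /psi -mulrzl PhiM // cf_scale mul1r.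
    by rewrite -[n%:~R]/(1 *~ n) (addz_morph (@cfD _)).
have [Psi [[PsiD _] Psig]] := baer_ext_one D_baer sI lpsi.
exists (MkC (fun a b => PsiD a b Logic.I Logic.I)) => x ix.
apply: Ceq => s; rewrite cf_scale /=.
rewrite Psig; last exact: IM.
by rewrite /psi PhiM // cf_scale mul1r.
Qed.

Lemma C_sep (X : lmodType R) (P : X -> Prop) (x : X) : submod P -> ~ P x ->
  exists h : X -> Cf, [/\ linon (fun _ => True) h, forall p, P p -> h p = 0 & h x != 0].
Proof.
move=> [P0 PD PZ] nPx.
have sP : @submod int (zmodule X) P.
  split => // n y py; rewrite scalezrE -scaler_int; exact: PZ.
have [g [gD gP gx]] := D_sep sP nPx.
pose h (y : X) := MkC (fun a b => (etrans (congr1 g (scalerDl y a b)) (gD _ _))).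
exists h; split.
- split.
  + by move=> y z _ _; apply: Ceq => s /=; rewrite scalerDr gD.
  + by move=> r y _; apply: Ceq => s /=; rewrite scalerA.
- by move=> p pp; apply: Ceq => s /=; rewrite gP //; apply: PZ.
- apply/eqP => /(congr1 (fun u => cf u 1)) /=; rewrite scale1r => e.
  by move: gx; rewrite e eqxx.
Qed.
End CMod.

Section FunMod.
Variable R : pzRingType.
Variables (J : Type) (M : lmodType R).
Definition Fm := J -> M.
HB.instance Definition _ := hasDecEq.Build Fm (@ceqP Fm).
HB.instance Definition _ := hasChoice.Build Fm (@cfind_correct Fm) (@cfind_complete Fm) (@cfind_ext Fm).
Definition Fadd (u v : Fm) : Fm := fun j => u j + v j.
Definition Fopp (u : Fm) : Fm := fun j => - u j.
Definition F0 : Fm := fun _ => 0.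
Definition Fscale (r : R) (u : Fm) : Fm := fun j => r *: u j.
Lemma Fext (u v : Fm) : (forall j, u j = v j) -> u = v.
Proof. exact: functional_extensionality. Qed.
Lemma FaddA : associative Fadd. Proof. by move=> u v w; apply: Fext => j; rewrite /Fadd addrA. Qed.
Lemma FaddC : commutative Fadd. Proof. by move=> u v; apply: Fext => j; rewrite /Fadd addrC. Qed.
Lemma Fadd0 : left_id F0 Fadd. Proof. by move=> u; apply: Fext => j; rewrite /Fadd add0r. Qed.
Lemma FaddN : left_inverse F0 Fopp Fadd. Proof. by move=> u; apply: Fext => j; rewrite /Fadd addNr. Qed.
HB.instance Definition _ := GRing.isZmodule.Build Fm FaddA FaddC Fadd0 FaddN.
Lemma FscaleA a b v : Fscale a (Fscale b v) = Fscale (a * b) v.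
Proof. by apply: Fext => j; rewrite /Fscale scalerA. Qed.
Lemma Fscale1 : left_id 1 Fscale.
Proof. by move=> v; apply: Fext => j; rewrite /Fscale scale1r. Qed.
Lemma FscaleDr : right_distributive Fscale +%R.
Proof. by move=> r u v; apply: Fext => j; rewrite /Fscale scalerDr. Qed.
Lemma FscaleDl v : {morph Fscale^~ v : a b / a + b}.
Proof. by move=> a b; apply: Fext => j; rewrite /Fscale scalerDl. Qed.
HB.instance Definition _ := GRing.Zmodule_isLmodule.Build R Fm FscaleA Fscale1 FscaleDr FscaleDl.

Lemma Fm_baer : baer M -> baer Fm.
Proof.
move=> bM I Phi lI PhiD PhiM.
have ex j : exists e : M, forall x, I x -> Phi x j = x *: e.
  apply: (bM I (fun r => Phi r j) lI).
  - by move=> x y ix iy; rewrite PhiD.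
  - by move=> r x ix; rewrite PhiM.
exists (fun j => sval (constructive_indefinite_description _ (ex j))) => x ix.
apply: Fext => j; rewrite [RHS]/(Fscale _ _ _).
by case: (constructive_indefinite_description _ (ex j)) => e /= ->.
Qed.
End FunMod.

Section Cog.
Variable R : pzRingType.
Variables (X : lmodType R) (P : X -> Prop).
Definition Hidx := {h : X -> Cf R | linon (fun _ => True) h /\ forall p, P p -> h p = 0}.
Definition Ecog := Fm Hidx (Cf R).
Definition cogi (y : X) : Ecog := fun h => sval h y.

Lemma cogi_lin : linon (fun _ => True) cogi.
Proof.
split.
- move=> y z _ _; apply: Fext => h; rewrite /cogi; case: (svalP h) => [[hD _] _].
  by rewrite hD.
- move=> r y _; apply: Fext => h; rewrite /cogi; case: (svalP h) => [[_ hZ] _].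
  by rewrite hZ.
Qed.

Lemma cogi_ker (y : X) : submod P -> (cogi y = 0 <-> P y).
Proof.
move=> sP; split; last first.
  by move=> py; apply: Fext => h; rewrite /cogi; case: (svalP h) => _ ->.
move=> e; apply: NNPP => npy.
have [h [lh hP hy]] := C_sep sP npy.
have := congr1 (fun u : Ecog => u (exist _ h (conj lh hP))) e => /= hy0.
by move: hy; rewrite /cogi /= in hy0; rewrite hy0 eqxx.
Qed.

Lemma Ecog_baer : baer Ecog.
Proof. apply: Fm_baer; exact: C_baer. Qed.
End Cog.

Section DSum.
Variable R : pzRingType.
Variable M : lmodType R.

Record Ds := MkDs { ds : nat -> M; dsP : exists N, forall n, (N <= n)%N -> ds n = 0 }.

Lemma Dseq (a b : Ds) : (forall n, ds a n = ds b n) -> a = b.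
Proof.
case: a => fa ha; case: b => fb hb /= h.
have e : fa = fb by apply: functional_extensionality.
subst fb; f_equal; apply: proof_irrelevance.
Qed.

HB.instance Definition _ := hasDecEq.Build Ds (@ceqP Ds).
HB.instance Definition _ := hasChoice.Build Ds (@cfind_correct Ds) (@cfind_complete Ds) (@cfind_ext Ds).

Fact Dsadd_proof (u v : Ds) : exists N, forall n, (N <= n)%N -> ds u n + ds v n = 0.
Proof.
case: (dsP u) => N1 h1; case: (dsP v) => N2 h2; exists (maxn N1 N2) => n.
by rewrite geq_max => /andP [/h1 -> /h2 ->]; rewrite addr0.
Qed.
Definition Dsadd (u v : Ds) := MkDs (Dsadd_proof u v).
Fact Dsopp_proof (u : Ds) : exists N, forall n, (N <= n)%N -> - ds u n = 0.
Proof. by case: (dsP u) => N h; exists N => n /h ->; rewrite oppr0. Qed.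
Definition Dsopp (u : Ds) := MkDs (Dsopp_proof u).
Fact Ds0_proof : exists N, forall n : nat, (N <= n)%N -> (0 : M) = 0.
Proof. by exists 0%N. Qed.
Definition Ds0 := MkDs Ds0_proof.
Fact Dsscale_proof r (u : Ds) : exists N, forall n, (N <= n)%N -> r *: ds u n = 0.
Proof. by case: (dsP u) => N h; exists N => n /h ->; rewrite scaler0. Qed.
Definition Dsscale r (u : Ds) := MkDs (Dsscale_proof r u).

Lemma DsaddA : associative Dsadd. Proof. by move=> u v w; apply: Dseq => s /=; rewrite addrA. Qed.
Lemma DsaddC : commutative Dsadd. Proof. by move=> u v; apply: Dseq => s /=; rewrite addrC. Qed.
Lemma Dsadd0 : left_id Ds0 Dsadd. Proof. by move=> u; apply: Dseq => s /=; rewrite add0r. Qed.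
Lemma DsaddN : left_inverse Ds0 Dsopp Dsadd. Proof. by move=> u; apply: Dseq => s /=; rewrite addNr. Qed.
HB.instance Definition _ := GRing.isZmodule.Build Ds DsaddA DsaddC Dsadd0 DsaddN.
Lemma DsscaleA a b v : Dsscale a (Dsscale b v) = Dsscale (a * b) v.
Proof. by apply: Dseq => s /=; rewrite scalerA. Qed.
Lemma Dsscale1 : left_id 1 Dsscale.
Proof. by move=> v; apply: Dseq => s /=; rewrite scale1r. Qed.
Lemma DsscaleDr : right_distributive Dsscale +%R.
Proof. by move=> r u v; apply: Dseq => s /=; rewrite scalerDr. Qed.
Lemma DsscaleDl v : {morph Dsscale^~ v : a b / a + b}.
Proof. by move=> a b; apply: Dseq => s /=; rewrite scalerDl. Qed.
HB.instance Definition _ := GRing.Zmodule_isLmodule.Build R Ds DsscaleA Dsscale1 DsscaleDr DsscaleDl.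

Lemma ds_add (u v : Ds) n : ds (u + v) n = ds u n + ds v n. Proof. by []. Qed.
Lemma ds_scale r (u : Ds) n : ds (r *: u) n = r *: ds u n. Proof. by []. Qed.
Lemma ds_zero n : ds (0 : Ds) n = 0. Proof. by []. Qed.

Lemma Ds_baer : left_noetherian R -> baer M -> baer Ds.
Proof.
move=> noeth bM I Phi lI PhiD PhiM.
have [I0 ID IM] := lI.
have Phi0 : Phi 0 = 0.
  by apply: (@addrI _ (Phi 0)); rewrite -PhiD // !addr0.
pose In n x := I x /\ forall m, (n <= m)%N -> ds (Phi x) m = 0.
have lIn n : left_ideal (In n).
  split.
  - by split => // m _; rewrite Phi0.
  - move=> x y [ix hx] [iy hy]; split; first exact: ID.
    by move=> m nm; rewrite PhiD // ds_add hx // hy // addr0.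
  - move=> r x [ix hx]; split; first exact: IM.
    by move=> m nm; rewrite PhiM // ds_scale hx // scaler0.
have [N0 hN0] := noeth In lIn (fun n x '(conj ix hx) => conj ix (fun m nm => hx m (ltnW nm))).
have ex j : exists e : M, forall x, I x -> ds (Phi x) j = x *: e.
  apply: (bM I (fun r => ds (Phi r) j) lI).
  - by move=> x y ix iy; rewrite PhiD.
  - by move=> r x ix; rewrite PhiM.
pose ej j := sval (constructive_indefinite_description _ (ex j)).
have ejP j x : I x -> ds (Phi x) j = x *: ej j.
  by rewrite /ej; case: (constructive_indefinite_description _ (ex j)) => e /= h; apply: h.
have eP : exists N, forall n, (N <= n)%N -> (if (n < N0)%N then ej n else 0) = 0.
  by exists N0 => n; rewrite leqNgt => /negbTE ->.
exists (MkDs eP) => x ix; apply: Dseq => j; rewrite ds_scale /=.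
case: ifP => jN; first exact: ejP.
rewrite scaler0.
case: (dsP (Phi x)) => Nx hNx.
have : In (maxn Nx N0) x.
  by split => // m; rewrite geq_max => /andP [/hNx ->].
move/(hN0 _ _ (leq_maxr Nx N0)) => [_ h]; apply: h.
by rewrite leqNgt jN.
Qed.
End DSum.

Lemma pair_baer (R : pzRingType) (M1 M2 : lmodType R) : baer M1 -> baer M2 -> baer (M1 * M2)%type.
Proof.
move=> b1 b2 I Phi lI PhiD PhiM.
have [e1 h1] := b1 I (fun r => (Phi r).1) lI
  (fun x y ix iy => congr1 fst (PhiD x y ix iy)) (fun r x ix => congr1 fst (PhiM r x ix)).
have [e2 h2] := b2 I (fun r => (Phi r).2) lI
  (fun x y ix iy => congr1 snd (PhiD x y ix iy)) (fun r x ix => congr1 snd (PhiM r x ix)).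
exists (e1, e2) => x ix.
by rewrite [Phi x]surjective_pairing h1 // h2.
Qed.

Definition nS (s : seq nat) : nat := foldr (fun i m => maxn i.+1 m) 0%N s.
Lemma nS_le s n : (nS s <= n)%N = all (fun i => i < n)%N s.
Proof. by elim: s => [|i s IH] //=; rewrite geq_max IH. Qed.
Lemma nS_mem s i : i \in s -> (i < nS s)%N.
Proof.
elim: s => [|j s IH] //=; rewrite in_cons => /orP [/eqP ->|/IH h].
  by rewrite leq_max leqnn.
by rewrite leq_max h orbT.
Qed.
Lemma nS_mono (S T : finsub) : finsub_le S T -> (nS (val S) <= nS (val T))%N.
Proof.
move=> h; rewrite nS_le; apply/allP => i iS.
by apply: nS_mem; move/allP: h => /(_ i iS).
Qed.

Section Main.
Variable R : pzRingType.
Variable A : lmodType R.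
Hypothesis noeth : left_noetherian R.

Definition P0 (a : A) := a = 0.
Lemma sP0 : submod P0.
Proof.
split; rewrite /P0 //; first by move=> x y -> ->; rewrite addr0.
by move=> r x ->; rewrite scaler0.
Qed.
Definition E0 := Ecog P0.
Definition i0 : A -> E0 := @cogi _ _ P0.
Lemma i0_lin : linon (fun _ => True) i0.
Proof. exact: cogi_lin. Qed.
Lemma i0_inj : injective i0.
Proof.
move=> a b e; apply/eqP; rewrite -subr_eq0; apply/eqP.
case: i0_lin => hD hZ.
apply/(cogi_ker (a - b) sP0).
have -> : cogi (a - b) = i0 (a - b) by [].
by rewrite -scaleN1r hD // hZ // scaleN1r e subrr.
Qed.

Definition Q (y : E0) := exists a, y = i0 a.
Lemma sQ : submod Q.
Proof.
case: i0_lin => hD hZ.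
split.
- by exists 0; rewrite (additive0 (fun a b => hD a b Logic.I Logic.I)).
- by move=> _ _ [a ->] [b ->]; exists (a + b); rewrite hD.
- by move=> r _ [a ->]; exists (r *: a); rewrite hZ.
Qed.
Definition E1 := Ecog Q.
Definition f1 : E0 -> E1 := @cogi _ _ Q.
Lemma f1_lin : linon (fun _ => True) f1.
Proof. exact: cogi_lin. Qed.
Lemma f1_ker y : f1 y = 0 <-> Q y.
Proof. exact: (cogi_ker y sQ). Qed.

Definition F := Ds E1.
Definition G := (E0 * F)%type.

Fact shift_proof (d : nat) (u : G) : exists N, forall n, (N <= n)%N ->
  (if (n < d)%N then f1 u.1 else ds u.2 (n - d)) = 0.
Proof.
case: (dsP u.2) => N h; exists (N + d)%N => n nN.
have dn : (d <= n)%N by apply: leq_trans nN; rewrite leq_addl.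
rewrite ltnNge dn /=; apply: h; by rewrite leq_subRL // addnC.
Qed.
Definition shift (d : nat) (u : G) : G := (u.1, MkDs (shift_proof d u)).

Lemma shift_lin d : linear (shift d).
Proof.
move=> r u v; case: f1_lin => fD fZ.
congr pair; apply: Dseq => j /=; case: ifP => _ //.
by rewrite fD // fZ.
Qed.

Lemma shift0 u : shift 0 u = u.
Proof.
case: u => a z; congr pair; apply: Dseq => j /=; by rewrite subn0.
Qed.

Lemma shiftD d e u : shift d (shift e u) = shift (d + e) u.
Proof.
congr pair; apply: Dseq => j /=.
case: (ltnP j d) => jd.
  by rewrite (leq_trans jd) // leq_addr.
by rewrite ltn_subLR // subnDA.
Qed.

Lemma shift_inj d : injective (shift d).
Proof.
move=> [a z] [b w] /= e; case: e => eab ezw; subst b; congr pair.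
apply: Dseq => j; have := congr1 (fun u => u (j + d)) ezw => /=.
by rewrite ltnNge leq_addl /= addnK.
Qed.

Lemma G_baer : baer G.
Proof.
apply: pair_baer; first exact: (@Ecog_baer _ _ P0).
apply: Ds_baer => //; exact: (@Ecog_baer _ _ Q).
Qed.

End Main.

Lemma phi_lin (R : pzRingType) (A : lmodType R) : linear (fun a : A => ((i0 a, 0) : G A)).
Proof.
move=> r a b; case: (@i0_lin R A) => hD hZ.
congr pair; [by rewrite hD // hZ | ].
by apply: Dseq => j /=; rewrite scaler0 addr0.
Qed.

Theorem mainTheorem3 (R : pzRingType) (A : lmodType R) :
  left_noetherian R ->
  exists (M : finsub -> lmodType R)
         (p : forall S T : finsub, finsub_le S T -> {linear M T -> M S}),
    [/\ inverse_system p,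
        (forall S, injective_module (M S)),
        (forall S T (h : finsub_le S T), injective (p S T h)) &
        is_inverse_limit A p].
Proof.
move=> noeth.
pose GG : lmodType R := GRing.Lmodule.clone R (G A) _.
pose sh d : {linear GG -> GG} := HB.pack (@shift R A d) (GRing.isLinear.Build _ _ _ _ (@shift R A d) (@shift_lin R A d)).
pose M := fun _ : finsub => GG.
exists M, (fun S T _ => sh (nS (val T) - nS (val S))%N).
split.
- split.
  + by move=> S h x /=; rewrite subnn shift0.
  + move=> S T U hST hTU hSU x /=; rewrite shiftD; congr shift.
    have h1 := nS_mono hST; have h2 := nS_mono hTU.
    by rewrite addnC addnBA // subnK.
- move=> S; exact: (baer_injective (@G_baer R A noeth)).
- move=> S T h; exact: shift_inj.
pose ph : {linear A -> GG} := HB.pack (fun a : A => ((i0 a, 0) : G A)) (GRing.isLinear.Build _ _ _ _ (fun a : A => ((i0 a, 0) : G A)) (@phi_lin R A)).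
exists (fun _ => ph); split.
- move=> S T h a /=; congr pair; apply: Dseq => j /=.
  case: ifP => // _; apply/f1_ker; by exists a.
- move=> a b /(_ (exist _ [::] isT)) /= [] /i0_inj //.
move=> x xc.
pose fs0 : finsub := exist _ [::] isT.
pose Sj (j : nat) : finsub := exist _ [:: j] isT.
have le0 (S : finsub) : finsub_le fs0 S by [].
have xj j : ds (x fs0).2 j = f1 (x fs0).1.
  have := xc fs0 (Sj j) (le0 _) => /= <- /=.
  by rewrite subn0 ltnSn.
have fe0 : f1 (x fs0).1 = 0.
  case: (dsP (x fs0).2) => N hN; by rewrite -(xj N) hN.
have [a ea] : Q (x fs0).1 by apply/f1_ker.
have x0 : x fs0 = ph a.
  rewrite [x fs0]surjective_pairing ea /=; congr pair.
  by apply: Dseq => j; rewrite xj fe0.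
exists a => S.
apply: (@shift_inj R A (nS (val S) - nS (val fs0))%N).
have := xc fs0 S (le0 S) => /= ->; rewrite x0 /=.
congr pair; apply: Dseq => j /=; case: ifP => // _.
by rewrite -ea fe0.
Qed.
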